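(* Assume $b_1<n^*$ and $b_2<m^*$. Then every Nash equilibrium $(\sigma^{1*},\sigma^{2*})$ of $\Gamma(b_1,b_2)$ satisfies $|S|=b_1$ for all $S$ in the support of $\sigma^{1*}$ and $|T|=b_2$ for all $T$ in the support of $\sigma^{2*}$. Moreover, with $\overline{\mathcal A_1}=\{S\subseteq\mathcal V:|S|=b_1\}$ and $\overline{\mathcal A_2}=\{T\subseteq\mathcal E:|T|=b_2\}$, a strategy profile $(\sigma^1,\sigma^2)$ is a Nash equilibrium of $\Gamma(b_1,b_2)$ if and only if $\sigma^1\in\Delta(\overline{\mathcal A_1})$ is an optimal solution of $\max_{\sigma^1\in\Delta(\overline{\mathcal A_1})}\min_{T\in\overline{\mathcal A_2}}U_1(\sigma^1,T)$ and $\sigma^2\in\Delta(\overline{\mathcal A_2})$ is an optimal solution of $\min_{\sigma^2\in\Delta(\overline{\mathcal A_2})}\max_{S\in\overline{\mathcal A_1}}U_1(S,\sigma^2)$.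
   Context: Detection model: finite nonempty sets $\mathcal V$, $\mathcal E$, monitoring sets $\mathcal C_i\subseteq\mathcal E$ ($i\in\mathcal V$) with every $e\in\mathcal E$ in some $\mathcal C_i$; $\mathcal C_S=\bigcup_{i\in S}\mathcal C_i$; $F(S,T)=|\mathcal C_S\cap T|$. Set cover: $S\subseteq\mathcal V$ with $\mathcal C_S=\mathcal E$; $n^*$ = minimum size of a set cover. Set packing: $T\subseteq\mathcal E$ with $|\mathcal C_i\cap T|\le1$ for all $i$; $m^*$ = maximum size of a set packing. Game $\Gamma(b_1,b_2)$ ($b_1,b_2$ positive integers): $\mathcal A_1=\{S\subseteq\mathcal V:|S|\le b_1\}$, $\mathcal A_2=\{T\subseteq\mathcal E:|T|\le b_2\}$; mixed strategies $\sigma^1\in\Delta(\mathcal A_1)$, $\sigma^2\in\Delta(\mathcal A_2)$ (independent randomizations); payoffs $U_1(\sigma^1,\sigma^2)=\mathbb E[F(S,T)]$ and $U_2(\sigma^1,\sigma^2)=\mathbb E[|T|]-\mathbb E[F(S,T)]$; pure actions identified with point masses. A Nash equilibrium is a profile $(\sigma^{1*},\sigma^{2*})$ with $U_1(\sigma^{1*},\sigma^{2*})\ge U_1(\sigma^1,\sigma^{2*})$ for all $\sigma^1$ and $U_2(\sigma^{1*},\sigma^{2*})\ge U_2(\sigma^{1*},\sigma^2)$ for all $\sigma^2$. Distributions on $\overline{\mathcal A_j}\subseteq\mathcal A_j$ are viewed as elements of $\Delta(\mathcal A_j)$. *)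

(* Defs.v *)
From HB Require Import structures.
From mathcomp Require Import all_boot all_order all_algebra.
Set Implicit Arguments. Unset Strict Implicit. Unset Printing Implicit Defensive.
Import Order.TTheory GRing.Theory Num.Theory.
Local Open Scope ring_scope.

Section Detection.
Variables (R : realFieldType) (V E : finType) (C : V -> {set E}).

Definition CS (S : {set V}) : {set E} := \bigcup_(i in S) C i.
Definition Fdet (S : {set V}) (T : {set E}) : nat := #|CS S :&: T|.

Definition set_cover (S : {set V}) : bool := CS S == [set: E].
Definition set_packing (T : {set E}) : bool := [forall i, #|C i :&: T| <= 1]%N.
(* n* : minimum size of a set cover (V itself is a cover under the standing
   assumption, so the default #|V| is harmless) *)
Definition nstar : nat := \big[minn/#|V|]_(S : {set V} | set_cover S) #|S|.
Definition mstar : nat := \max_(T : {set E} | set_packing T) #|T|.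

Definition in_Delta (X : finType) (A : pred X) (s : {ffun X -> R}) : Prop :=
  (forall x, 0 <= s x) /\ \sum_x s x = 1 /\ (forall x, s x != 0 -> A x).

Definition pure (X : finType) (x : X) : {ffun X -> R} := [ffun y => (y == x)%:R].

Definition A1 (b1 : nat) : pred {set V} := fun S => (#|S| <= b1)%N.
Definition A2 (b2 : nat) : pred {set E} := fun T => (#|T| <= b2)%N.
Definition A1bar (b1 : nat) : pred {set V} := fun S => #|S| == b1.
Definition A2bar (b2 : nat) : pred {set E} := fun T => #|T| == b2.

Definition U1 (s1 : {ffun {set V} -> R}) (s2 : {ffun {set E} -> R}) : R :=
  \sum_S \sum_T s1 S * s2 T * (Fdet S T)%:R.
Definition U2 (s1 : {ffun {set V} -> R}) (s2 : {ffun {set E} -> R}) : R :=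
  \sum_S \sum_T s1 S * s2 T * ((#|T|)%:R - (Fdet S T)%:R).

Definition nash (b1 b2 : nat) s1 s2 : Prop :=
  in_Delta (A1 b1) s1 /\ in_Delta (A2 b2) s2 /\
  (forall s1', in_Delta (A1 b1) s1' -> U1 s1' s2 <= U1 s1 s2) /\
  (forall s2', in_Delta (A2 b2) s2' -> U2 s1 s2' <= U2 s1 s2).

(* s1 is optimal for  max_{s in Δ(A1bar)} min_{T in A2bar} U1(s,T):
   for every competitor s1', min_T U1(s1',T) <= min_T U1(s1,T), i.e. some
   T' in A2bar has U1(s1',T') below every U1(s1,T), T in A2bar. *)
Definition maxmin_opt (b1 b2 : nat) s1 : Prop :=
  in_Delta (A1bar b1) s1 /\
  forall s1', in_Delta (A1bar b1) s1' ->
    exists2 T', A2bar b2 T' &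
      forall T, A2bar b2 T -> U1 s1' (pure T') <= U1 s1 (pure T).

Definition minmax_opt (b1 b2 : nat) s2 : Prop :=
  in_Delta (A2bar b2) s2 /\
  forall s2', in_Delta (A2bar b2) s2' ->
    exists2 S', A1bar b1 S' &
      forall S, A1bar b1 S -> U1 (pure S) s2 <= U1 (pure S') s2'.

End Detection.

(* Main.v *)
Require Import Defs.
From HB Require Import structures.
From mathcomp Require Import all_boot all_order all_algebra.
From mathcomp Require Import ring lra zify.
Import Order.TTheory GRing.Theory Num.Theory.
Local Open Scope ring_scope.
Set Implicit Arguments. Unset Strict Implicit. Unset Printing Implicit Defensive.

Section Gord.
Variable R : realFieldType.
Lemma sep1 (l : R) (U : seq R) : (forall u, u \in U -> l < u) ->
  exists t, l < t /\ forall u, u \in U -> t < u.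
Proof.
elim: U => [|u U IH] H.
  by exists (l + 1); split => //; lra.
have [t [lt tU]] : exists t, l < t /\ forall u, u \in U -> t < u.
  by apply: IH => v vU; apply: H; rewrite inE vU orbT.
have lu : l < u by apply: H; rewrite inE eqxx.
exists (Num.min t ((l + u) / 2)); split.
  rewrite lt_min lt; lra.
move=> v; rewrite inE => /orP [/eqP -> | vU].
  by rewrite gt_min; apply/orP; right; lra.
by rewrite gt_min tU.
Qed.

Lemma sep0 (U : seq R) : exists t, forall u, u \in U -> t < u.
Proof.
elim: U => [|u U [t Ht]]; first by exists 0.
exists (Num.min t (u - 1)) => v; rewrite inE => /orP [/eqP -> | vU].
  by rewrite gt_min; apply/orP; right; lra.
by rewrite gt_min Ht.
Qed.

Lemma sep (L U : seq R) : (forall l u, l \in L -> u \in U -> l < u) ->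
  exists t, (forall l, l \in L -> l < t) /\ forall u, u \in U -> t < u.
Proof.
elim: L => [|l L IH] H.
  by have [t Ht] := sep0 U; exists t.
have [t [tL tU]] : exists t, (forall l, l \in L -> l < t) /\ forall u, u \in U -> t < u.
  by apply: IH => l' u lL uU; apply: H => //; rewrite inE lL orbT.
have [t' [lt' t'U]] := @sep1 l U (fun u uU => H l u (mem_head _ _) uU).
exists (Num.max t t'); split.
  move=> v; rewrite inE => /orP [/eqP -> | vL].
    by rewrite lt_max lt' orbT.
  by rewrite lt_max tL.
by move=> u uU; rewrite gt_max tU // t'U.
Qed.

Lemma lemA (A x t : R) : 0 < A -> t < -x/A -> x + A*t < 0.
Proof. move=> hA ht; have h : -x/A * A = -x by rewrite mulfVK // gt_eqF.
move: ht h; set l := -x/A => ht h; nra. Qed.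
Lemma lemB (B x t : R) : B < 0 -> -x/B < t -> x + B*t < 0.
Proof. move=> hB ht; have h : -x/B * B = -x by rewrite mulfVK // lt_eqF.
move: ht h; set l := -x/B => ht h; nra. Qed.
Lemma lemC (A B x y : R) : 0 < A -> B < 0 -> A*x - B*y < 0 -> -x/B < -y/A.
Proof. move=> hA hB hxy.
have h1 : -x/B * B = -x by rewrite mulfVK // lt_eqF.
have h2 : -y/A * A = -y by rewrite mulfVK // gt_eqF.
move: h1 h2; set l := -x/B; set u := -y/A => h1 h2.
have : 0 < (u - l) * (A * - B).
  have -> : (u - l) * (A * - B) = (u*A)*(-B) - (l*B)*(-A) by ring.
  rewrite h1 h2. lra.
move=> h; have hAB : 0 < A * - B by apply: mulr_gt0; lra.
rewrite pmulr_lgt0 // in h; lra. Qed.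

Definition dotn (n : nat) (r y : nat -> R) := \sum_(k < n) r k * y k.

Definition JT (I : finType) (a : I -> nat -> R) (n : nat) : finType :=
  (({i : I | a i n == 0} + ({i : I | 0 < a i n} * {i : I | a i n < 0}))%type : finType).

Definition coef (I : finType) (a : I -> nat -> R) n (j : JT a n) (i : I) : R :=
  match j with
  | inl z => (sval z == i)%:R
  | inr pq => (sval pq.2 == i)%:R * a (sval pq.1) n - (sval pq.1 == i)%:R * a (sval pq.2) n
  end.

Lemma sum_ind (I : finType) (i0 : I) (F : I -> R) : \sum_i (i0 == i)%:R * F i = F i0.
Proof.
rewrite (bigD1 i0) //= eqxx mul1r big1 ?addr0 // => i /negbTE.
by rewrite eq_sym => ->; rewrite mul0r.
Qed.

Lemma coef_sum (I : finType) (a : I -> nat -> R) n (j : JT a n) (F : I -> R) :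
  \sum_i coef j i * F i =
  match j with
  | inl z => F (sval z)
  | inr pq => a (sval pq.1) n * F (sval pq.2) - a (sval pq.2) n * F (sval pq.1)
  end.
Proof.
case: j => [z|[p q]] /=; first exact: sum_ind.
under eq_bigr => i _ do rewrite mulrBl -!mulrA.
rewrite sumrB.
under eq_bigr => i _ do rewrite mulrCA.
rewrite -mulr_sumr sum_ind.
under eq_bigr => i _ do rewrite mulrCA.
by rewrite -mulr_sumr sum_ind.
Qed.

Lemma coef_ge0 (I : finType) (a : I -> nat -> R) n (j : JT a n) i : 0 <= coef j i.
Proof.
case: j => [z|[p q]] /=; first exact: ler0n.
have hp := svalP p; have hq := svalP q; move: hp hq => /= hp hq.
case: (sval q == i); case: (sval p == i) => /=; rewrite ?mul1r ?mul0r; lra.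
Qed.

Lemma gordan n : forall (I : finType) (a : I -> nat -> R),
  (exists y : nat -> R, forall i, dotn n (a i) y < 0) \/
  (exists w : I -> R, (forall i, 0 <= w i) /\ (exists i, 0 < w i) /\
      forall k, (k < n)%N -> \sum_i w i * a i k = 0).
Proof.
elim: n => [|n IH] I a.
  case: (pickP (@predT I)) => [i0 _ | h].
    right; exists (fun i => (i == i0)%:R); split; first by move=> i; exact: ler0n.
    by split; [exists i0; rewrite eqxx ltr01 | by []].
  by left; exists (fun _ => 0) => i; move: (h i).
pose a' (j : JT a n) k := \sum_i coef j i * a i k.
have a'n : forall j, a' j n = 0.
  move=> j; rewrite /a' coef_sum; case: j => [z|[p q]] /=.
    exact/eqP/(svalP z).
  by rewrite mulrC subrr.
case: (IH (JT a n) a') => [[y' Hy']|[w' [w'ge [[j0 hj0] w'k]]]].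
- pose d i := dotn n (a i) y'.
  have dj : forall j, dotn n (a' j) y' = \sum_i coef j i * d i.
    move=> j; rewrite /dotn /d /a'.
    under eq_bigr => k _ do rewrite mulr_suml.
    rewrite exchange_big /=; apply: eq_bigr => i _.
    by rewrite mulr_sumr; apply: eq_bigr => k _; rewrite mulrA.
  pose L := [seq - d i / a i n | i <- enum I & a i n < 0].
  pose U := [seq - d i / a i n | i <- enum I & 0 < a i n].
  have [t [tL tU]] : exists t, (forall l, l \in L -> l < t) /\ forall u, u \in U -> t < u.
    apply: sep => l u /mapP [i]; rewrite mem_filter => /andP [hi _] ->.
    move=> /mapP [p]; rewrite mem_filter => /andP [hp _] ->.
    apply: lemC => //.
    have := Hy' (inr (exist _ p hp, exist _ i hi)).
    by rewrite dj coef_sum.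
  left; exists (fun k => if k == n then t else y' k) => i.
  rewrite /dotn big_ord_recr /= eqxx.
  have -> : \sum_(k < n) a i (widen_ord (leqnSn n) k) * (if (widen_ord (leqnSn n) k : nat) == n then t else y' (widen_ord (leqnSn n) k)) = d i.
    by apply: eq_bigr => k _ /=; rewrite ltn_eqF.
  case: (ltrgtP (a i n) 0) => hi.
  + apply: lemB => //; apply: tL; apply/mapP; exists i => //.
    by rewrite mem_filter hi mem_enum.
  + apply: lemA => //; apply: tU; apply/mapP; exists i => //.
    by rewrite mem_filter hi mem_enum.
  + have hz : a i n == 0 by rewrite hi.
    have := Hy' (inl (exist _ i hz)); rewrite dj coef_sum /= hi mul0r addr0.
    by [].
- right; exists (fun i => \sum_j w' j * coef j i); split.
    by move=> i; apply: sumr_ge0 => j _; apply: mulr_ge0; [exact: w'ge | exact: coef_ge0].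
  split.
    have [i0 hi0] : exists i0, 0 < coef j0 i0.
      case: j0 hj0 => [z|[p q]] _ /=.
        by exists (sval z); rewrite eqxx ltr01.
      exists (sval q); rewrite eqxx mul1r.
      have hp := svalP p; have hq := svalP q; move: hp hq => /= hp hq.
      have -> : (sval p == sval q) = false.
        by apply/negbTE/eqP => e; move: hp; rewrite e; lra.
      by rewrite mul0r subr0.
    exists i0; rewrite (bigD1 j0) //=.
    apply: (lt_le_trans (mulr_gt0 hj0 hi0)); rewrite lerDl.
    by apply: sumr_ge0 => j _; apply: mulr_ge0; [exact: w'ge | exact: coef_ge0].
  move=> k hk.
  have -> : \sum_i (\sum_j w' j * coef j i) * a i k = \sum_j w' j * a' j k.
    under eq_bigr => i _ do rewrite mulr_suml.
    rewrite exchange_big /=; apply: eq_bigr => j _.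
    by rewrite /a' mulr_sumr; apply: eq_bigr => i _; rewrite mulrA.
  rewrite ltnS leq_eqVlt in hk; case/orP: hk => [/eqP -> | hk].
    by apply: big1 => j _; rewrite a'n mulr0.
  exact: w'k.
Qed.

End Gord.

Section Ville.
Variable R : realFieldType.

Lemma sum_enum (Y : finType) (Q : pred Y) (y0 : Y) (F : nat -> R) :
  \sum_j (if Q j then F (index j (enum Q)) else 0) = \sum_(k < size (enum Q)) F k.
Proof.
rewrite -big_mkcond /= -big_enum (big_nth y0) big_mkord.
apply: eq_bigr => k _; by rewrite index_uniq // enum_uniq.
Qed.

Lemma ville (X Y : finType) (P : pred X) (Q : pred Y) (g : X -> Y -> R) (c : R) (y0 : Y) :
  Q y0 ->
  (exists x : X -> R, (forall i, 0 <= x i) /\ \sum_i x i = 1 /\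
     (forall i, x i != 0 -> P i) /\ forall j, Q j -> c <= \sum_i x i * g i j) \/
  (exists z : Y -> R, (forall j, 0 <= z j) /\ \sum_j z j = 1 /\
     (forall j, z j != 0 -> Q j) /\ forall i, P i -> \sum_j g i j * z j < c).
Proof.
move=> Qy0; set qs := enum Q; set n := size qs.
have uq : uniq qs := enum_uniq Q.
have y0q : y0 \in qs by rewrite mem_enum.
have n0 : (0 < n)%N by rewrite /n; case: (qs) y0q.
pose col k := nth y0 qs k.
pose a (r : (X + 'I_n)%type) (k : nat) : R :=
  match r with inl i => if P i then g i (col k) - c else -1 | inr k0 => - (k == k0)%:R end.
have ainr : forall (y : nat -> R) (k0 : 'I_n), dotn n (a (inr k0)) y = - y k0.
  move=> y k0; rewrite /dotn /= (bigD1 k0) //= eqxx big1 ?addr0 ?mulN1r //.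
  move=> k hk; have -> : (k == k0 :> nat) = false by apply/negbTE.
  by rewrite mulr0n oppr0 mul0r.
case: (gordan n a) => [[y Hy] | [w [wge [[r0 hr0] wk]]]].
- right.
  have ypos : forall k, (k < n)%N -> 0 < y k.
    by move=> k hk; have := Hy (inr (Ordinal hk)); rewrite ainr /=; lra.
  set S := \sum_(k < n) y k.
  have Spos : 0 < S.
    rewrite /S (bigD1 (Ordinal n0)) //=; apply: (lt_le_trans (ypos 0%N n0)).
    by rewrite lerDl; apply: sumr_ge0 => k _; exact/ltW/ypos.
  exists (fun j => if Q j then y (index j qs) / S else 0); split.
    move=> j; case: ifP => // Qj; apply: divr_ge0; last exact: ltW.
    by apply/ltW/ypos; rewrite /n index_mem mem_enum.
  split.
    rewrite (sum_enum Q y0 (fun k => y k / S)) -/qs -/n -mulr_suml divff //.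
    by rewrite gt_eqF.
  split.
    by move=> j; case: ifP => //; rewrite eqxx.
  move=> i Pi.
  have -> : \sum_j g i j * (if Q j then y (index j qs) / S else 0) =
     \sum_j (if Q j then (g i (col (index j qs)) * y (index j qs) / S) else 0).
    apply: eq_bigr => j _; case: ifP => Qj; last by rewrite mulr0.
    by rewrite /col nth_index ?mem_enum // mulrA.
  rewrite (sum_enum Q y0 (fun k => g i (col k) * y k / S)) -/qs -/n -mulr_suml ltr_pdivrMr //.
  have := Hy (inl i); rewrite /dotn /= Pi.
  under eq_bigr => k _ do rewrite mulrBl.
  rewrite sumrB -mulr_sumr -/S; lra.
- have eqk : forall k0 : 'I_n, \sum_i w (inl i) * a (inl i) k0 = w (inr k0).
    move=> k0; have := wk k0 (ltn_ord k0); rewrite big_sumType /=.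
    have hr : \sum_(k < n | k != k0) w (inr k) * a (inr k) k0 = 0.
      apply: big1 => k hk /=; have -> : (k0 == k :> nat) = false.
        by apply/negbTE; rewrite eq_sym.
      by rewrite mulr0n oppr0 mulr0.
    rewrite [X in _ + X](bigD1 k0) //= hr addr0 eqxx mulr1n mulrN1; lra.
  set M := \sum_i (if P i then 0 else w (inl i)).
  set Wt := \sum_i (if P i then w (inl i) else 0).
  have decomp : forall k0 : 'I_n, \sum_i w (inl i) * a (inl i) k0 =
      \sum_i (if P i then w (inl i) * g i (col k0) else 0) - c * Wt - M.
    move=> k0; rewrite /Wt /M mulr_sumr -!sumrB; apply: eq_bigr => i _ /=.
    by case: (P i); ring.
  have Mge : 0 <= M by apply: sumr_ge0 => i _; case: ifP.
  have Wge : 0 <= Wt by apply: sumr_ge0 => i _; case: ifP.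
  have Wpos : 0 < Wt.
    rewrite lt_def Wge andbT; apply/negP => /eqP W0.
    have wP : forall i, P i -> w (inl i) = 0.
      move=> i Pi.
      have nn : forall j, predT j -> 0 <= (if P j then w (inl j) else 0).
        by move=> j _; case: ifP.
      by have := psumr_eq0P nn W0 (i:=i) isT; rewrite Pi.
    have S0 : forall k0 : 'I_n, \sum_i (if P i then w (inl i) * g i (col k0) else 0) = 0.
      by move=> k0; apply: big1 => i _; case: ifP => // Pi; rewrite wP // mul0r.
    have h := eqk (Ordinal n0); rewrite decomp S0 W0 in h.
    have M0 : M = 0 by have := wge (inr (Ordinal n0)); lra.
    have wnP : forall i, ~~ P i -> w (inl i) = 0.
      move=> i Pi.
      have nn : forall j, predT j -> 0 <= (if P j then 0 else w (inl j)).
        by move=> j _; case: ifP.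
      by have := psumr_eq0P nn M0 (i:=i) isT; rewrite (negbTE Pi).
    have winr : forall k0, w (inr k0) = 0.
      by move=> k0; have := eqk k0; rewrite decomp S0 W0 M0; lra.
    move: hr0; case: r0 => [i|k0].
      by case: (boolP (P i)) => Pi; [rewrite wP // | rewrite wnP //]; rewrite ltxx.
    by rewrite winr ltxx.
  left; exists (fun i => if P i then w (inl i) / Wt else 0); split.
    by move=> i; case: ifP => // _; apply: divr_ge0 => //; exact: ltW.
  split.
    have -> : \sum_i (if P i then w (inl i) / Wt else 0) = Wt / Wt.
      by rewrite /Wt mulr_suml; apply: eq_bigr => i _; case: ifP; rewrite ?mul0r.
    by rewrite divff // gt_eqF.
  split.
    by move=> i; case: ifP => //; rewrite eqxx.
  move=> j Qj.
  have hk : (index j qs < n)%N by rewrite /n index_mem mem_enum.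
  have cj : col (Ordinal hk) = j by rewrite /col /= nth_index // mem_enum.
  have := eqk (Ordinal hk); rewrite decomp cj => h.
  have := wge (inr (Ordinal hk)); rewrite -h => h2.
  have -> : \sum_i (if P i then w (inl i) / Wt else 0) * g i j =
      (\sum_i (if P i then w (inl i) * g i j else 0)) / Wt.
    rewrite mulr_suml; apply: eq_bigr => i _; case: ifP; rewrite ?mul0r // => _.
    by rewrite mulrAC.
  rewrite ler_pdivlMr //; lra.
Qed.
End Ville.

Section Avg.
Variable R : realFieldType.

Lemma term_le_sum (X : finType) (F : X -> R) a : (forall x, 0 <= F x) -> F a <= \sum_x F x.
Proof. by move=> h; rewrite (bigD1 a) //= lerDl; apply: sumr_ge0. Qed.

Definition distr (X : finType) (x : X -> R) := (forall a, 0 <= x a) /\ \sum_a x a = 1.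

Lemma avg_le (X : finType) (x : X -> R) h v : distr x ->
  (forall a, x a != 0 -> h a <= v) -> \sum_a x a * h a <= v.
Proof.
move=> [x0 x1] H; rewrite -[leRHS]mul1r -x1 mulr_suml; apply: ler_sum => a _.
by case: (eqVneq (x a) 0) => [->|/H ha]; rewrite ?mul0r // ler_wpM2l.
Qed.

Lemma avg_ge (X : finType) (x : X -> R) h v : distr x ->
  (forall a, x a != 0 -> v <= h a) -> v <= \sum_a x a * h a.
Proof.
move=> [x0 x1] H; rewrite -[leLHS]mul1r -x1 mulr_suml; apply: ler_sum => a _.
by case: (eqVneq (x a) 0) => [->|/H ha]; rewrite ?mul0r // ler_wpM2l.
Qed.

Lemma avg_eq (X : finType) (x : X -> R) h v : distr x ->
  (forall a, x a != 0 -> h a = v) -> \sum_a x a * h a = v.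
Proof.
move=> d H; apply/eqP; rewrite eq_le avg_le ?avg_ge // => a /H ->; exact: lexx.
Qed.

Lemma supp_eq (X : finType) (x : X -> R) h v : distr x ->
  (forall a, x a != 0 -> h a <= v) -> \sum_a x a * h a = v ->
  forall a, x a != 0 -> h a = v.
Proof.
move=> [x0 x1] H e a xa.
have s0 : \sum_a x a * (v - h a) = 0.
  under eq_bigr => b _ do rewrite mulrBr.
  by rewrite sumrB e -mulr_suml x1 mul1r subrr.
have nn : forall b, predT b -> 0 <= x b * (v - h b).
  move=> b _; case: (eqVneq (x b) 0) => [->|/H hb]; first by rewrite mul0r.
  by apply: mulr_ge0 => //; rewrite subr_ge0.
have := psumr_eq0P nn s0 (i:=a) isT; move/eqP; rewrite mulf_eq0 (negbTE xa) /=.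
by rewrite subr_eq0 => /eqP ->.
Qed.

Lemma supp_exists_le (X : finType) (x : X -> R) h v : distr x ->
  \sum_a x a * h a <= v -> exists a, x a != 0 /\ h a <= v.
Proof.
move=> [x0 x1] H; case: (boolP [exists a, (x a != 0) && (h a <= v)]).
  by move=> /existsP [a /andP [h1 h2]]; exists a.
move=> /existsPn hn; exfalso.
have hlt : forall a, x a != 0 -> v < h a.
  by move=> a xa; have := hn a; rewrite xa /= -ltNge.
have [a0 /andP [_ ha0]] : exists a, predT a && (0 < x a).
  by apply: psumr_neq0P => //; rewrite x1; apply/eqP; exact: oner_neq0.
have : v < \sum_a x a * h a.
  have -> : \sum_a x a * h a = v + \sum_a x a * (h a - v).
    under [X in _ = _ + X]eq_bigr => b _ do rewrite mulrBr.
    by rewrite sumrB -mulr_suml x1 mul1r addrC subrK.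
  rewrite ltrDl (bigD1 a0) //=; apply: ltr_pwDl.
    by apply: mulr_gt0 => //; rewrite subr_gt0 hlt // gt_eqF.
  apply: sumr_ge0 => b _; case: (eqVneq (x b) 0) => [->|/hlt hb]; first by rewrite mul0r.
  by apply: mulr_ge0 => //; rewrite subr_ge0 ltW.
by rewrite ltNge H.
Qed.

Lemma supp_exists_ge (X : finType) (x : X -> R) h v : distr x ->
  v <= \sum_a x a * h a -> exists a, x a != 0 /\ v <= h a.
Proof.
move=> d H; have := @supp_exists_le X x (fun a => - h a) (- v) d.
under eq_bigr => a _ do rewrite mulrN.
rewrite sumrN lerN2 => /(_ H) [a [xa ha]]; exists a; split => //; by rewrite -lerN2.
Qed.

Lemma exists_max (X : finType) (P : pred X) (h : X -> R) x0 : P x0 ->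
  exists a, P a /\ forall b, P b -> h b <= h a.
Proof.
move=> Px0; case: (arg_maxP h Px0) => a Pa Ha; exists a; split => //.
Qed.

End Avg.

Section Game.
Variables (R : realFieldType) (V E : finType) (C : V -> {set E}).

Definition Fr (S : {set V}) (T : {set E}) : R := (Fdet C S T)%:R.
Definition f1 (s2 : {ffun {set E} -> R}) S := \sum_T s2 T * Fr S T.
Definition f2 (s1 : {ffun {set V} -> R}) T := \sum_S s1 S * Fr S T.
Definition pe (s1 : {ffun {set V} -> R}) e := \sum_S s1 S * (e \in CS C S)%:R.
Definition qe (s2 : {ffun {set E} -> R}) e := \sum_T s2 T * (e \in T)%:R.

Lemma sum_pure (X : finType) (a : X) (F : X -> R) : \sum_x pure R a x * F x = F a.
Proof.
rewrite (bigD1 a) //= ffunE eqxx mul1r big1 ?addr0 // => x /negbTE hx.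
by rewrite ffunE hx mul0r.
Qed.

Lemma sum_pure1 (X : finType) (a : X) : \sum_x pure R a x = 1.
Proof.
rewrite (bigD1 a) //= ffunE eqxx big1 ?addr0 // => x /negbTE hx.
by rewrite ffunE hx.
Qed.

Lemma pure_Delta (X : finType) (P : pred X) a : P a -> in_Delta P (pure R a).
Proof.
move=> Pa; split; first by move=> x; rewrite ffunE ler0n.
split; first exact: sum_pure1.
by move=> x; rewrite ffunE; case: (eqVneq x a) => [->|] //= _; rewrite eqxx.
Qed.

Lemma Delta_distr (X : finType) (P : pred X) (s : {ffun X -> R}) :
  in_Delta P s -> distr (fun a => s a).
Proof. by case=> [h1 [h2 _]]. Qed.

Lemma card_ind (A T : {set E}) :
  (#|A :&: T|)%:R = \sum_e (e \in A)%:R * (e \in T)%:R :> R.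
Proof.
rewrite -sum1_card natr_sum big_mkcond /=; apply: eq_bigr => e _.
by rewrite in_setI; case: (e \in A); case: (e \in T); rewrite /= ?mul1r ?mul0r.
Qed.

Lemma card_indT (T : {set E}) : (#|T|)%:R = \sum_e (e \in T)%:R :> R.
Proof.
rewrite -sum1_card natr_sum big_mkcond /=; apply: eq_bigr => e _.
by case: (e \in T).
Qed.

Lemma f1_q s2 S : f1 s2 S = \sum_e (e \in CS C S)%:R * qe s2 e.
Proof.
rewrite /f1 /Fr /Fdet.
under eq_bigr => T _ do rewrite card_ind mulr_sumr.
rewrite exchange_big /=; apply: eq_bigr => e _.
rewrite /qe mulr_sumr; apply: eq_bigr => T _; ring.
Qed.

Lemma f2_p s1 T : f2 s1 T = \sum_e (e \in T)%:R * pe s1 e.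
Proof.
rewrite /f2 /Fr /Fdet.
under eq_bigr => S _ do rewrite card_ind mulr_sumr.
rewrite exchange_big /=; apply: eq_bigr => e _.
rewrite /pe mulr_sumr; apply: eq_bigr => S _; ring.
Qed.

Lemma U1_L s1 s2 : U1 C s1 s2 = \sum_S s1 S * f1 s2 S.
Proof.
rewrite /U1; apply: eq_bigr => S _; rewrite /f1 mulr_sumr.
by apply: eq_bigr => T _; rewrite /Fr mulrA.
Qed.

Lemma U1_R s1 s2 : U1 C s1 s2 = \sum_T s2 T * f2 s1 T.
Proof.
rewrite /U1 exchange_big /=; apply: eq_bigr => T _; rewrite /f2 mulr_sumr.
by apply: eq_bigr => S _; rewrite /Fr; ring.
Qed.

Lemma U1_pureL S s2 : U1 C (pure R S) s2 = f1 s2 S.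
Proof. by rewrite U1_L sum_pure. Qed.

Lemma U1_pureR s1 T : U1 C s1 (pure R T) = f2 s1 T.
Proof. by rewrite U1_R sum_pure. Qed.

Lemma U2_R (s1 : {ffun {set V} -> R}) s2 : \sum_S s1 S = 1 ->
  U2 C s1 s2 = \sum_T s2 T * ((#|T|)%:R - f2 s1 T).
Proof.
move=> h1; rewrite /U2 exchange_big /=; apply: eq_bigr => T _.
have -> : \sum_S s1 S * s2 T * ((#|T|)%:R - (Fdet C S T)%:R) =
    (\sum_S s1 S) * (s2 T * (#|T|)%:R) - s2 T * f2 s1 T.
  rewrite mulr_suml /f2 mulr_sumr -sumrB; apply: eq_bigr => S _; rewrite /Fr; ring.
by rewrite h1 mul1r mulrBr.
Qed.

Lemma U2_pureR (s1 : {ffun {set V} -> R}) T : \sum_S s1 S = 1 ->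
  U2 C s1 (pure R T) = (#|T|)%:R - f2 s1 T.
Proof. by move=> h1; rewrite U2_R // sum_pure. Qed.

End Game.

Section Comb.
Variable R : realFieldType.

Lemma gain (X : finType) (h : X -> R) (A B : {set X}) e0 :
  (forall e, 0 <= h e) -> A \subset B -> e0 \in B -> e0 \notin A ->
  \sum_e (e \in A)%:R * h e + h e0 <= \sum_e (e \in B)%:R * h e.
Proof.
move=> h0 /subsetP AB e0B e0A.
have H : h e0 <= \sum_e ((e \in B)%:R * h e - (e \in A)%:R * h e).
  have -> : h e0 = (e0 \in B)%:R * h e0 - (e0 \in A)%:R * h e0.
    by rewrite e0B (negbTE e0A) mul0r subr0 mul1r.
  apply: (term_le_sum (F := fun e => (e \in B)%:R * h e - (e \in A)%:R * h e)) => e.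
  rewrite -mulrBl; apply: mulr_ge0 => //.
  case: (boolP (e \in A)) => eA; first by rewrite (AB _ eA) subrr.
  by rewrite subr0 ler0n.
by move: H; rewrite sumrB; lra.
Qed.

Lemma mono (X : finType) (h : X -> R) (A B : {set X}) :
  (forall e, 0 <= h e) -> A \subset B ->
  \sum_e (e \in A)%:R * h e <= \sum_e (e \in B)%:R * h e.
Proof.
move=> h0 /subsetP AB; apply: ler_sum => e _; apply: ler_wpM2r => //.
case: (boolP (e \in A)) => eA; first by rewrite (AB _ eA).
exact: ler0n.
Qed.

Lemma extend (X : finType) (A : {set X}) n : (#|A| <= n <= #|X|)%N ->
  exists B : {set X}, A \subset B /\ #|B| = n.
Proof.
move=> /andP [h1 h2]; have [k ek] : exists k, n = (#|A| + k)%N.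
  by exists (n - #|A|)%N; rewrite subnKC.
subst n; move: h2; elim: k A {h1} => [|k IH] A h2; first by exists A; rewrite addn0.
have hA : (#|A| < #|X|)%N by lia.
have : A != [set: X] by apply: contraTneq hA => ->; rewrite cardsT ltnn.
move=> hne; have [x _ xA] : exists2 x, x \in [set: X] & x \notin A by apply/subsetPn; rewrite subTset.
have h3 : (#|x |: A| + k <= #|X|)%N by rewrite cardsU1 xA; lia.
have [B [sB cB]] := IH (x |: A) h3.
exists B; split; first by apply: subset_trans sB; exact: subsetUr.
by rewrite cB cardsU1 xA; lia.
Qed.

Lemma bigmin_le (I : finType) (P : pred I) (F : I -> nat) x j :
  P j -> (\big[minn/x]_(i | P i) F i <= F j)%N.
Proof.
move=> Pj; have : j \in index_enum I := mem_index_enum j.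
elim: (index_enum I) => // a r IH; rewrite inE big_cons => /orP [/eqP <- | jr].
  by rewrite Pj geq_minl.
case: ifP => _; last exact: IH.
by apply: leq_trans (geq_minr _ _) (IH jr).
Qed.

Variables (V E : finType) (C : V -> {set E}).

Lemma nstar_le S : set_cover C S -> (nstar C <= #|S|)%N.
Proof. by move=> h; rewrite /nstar; apply: bigmin_le. Qed.

Lemma not_cover (S : {set V}) : (#|S| < nstar C)%N -> exists e, e \notin CS C S.
Proof.
move=> h; case: (boolP (set_cover C S)) => [/nstar_le| hn].
  by rewrite leqNgt h.
have [e _ eS] : exists2 e, e \in [set: E] & e \notin CS C S.
  by apply/subsetPn; rewrite subTset.
by exists e.
Qed.

Lemma nstar_leV : (forall e, exists i, e \in C i) -> (nstar C <= #|V|)%N.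
Proof.
move=> hc; rewrite -cardsT; apply: nstar_le; apply/eqP/setP => e.
rewrite in_setT; have [i ei] := hc e; apply/bigcupP; by exists i.
Qed.

Lemma packing_ex : exists P, set_packing C P /\ #|P| = mstar C.
Proof.
have : (0 < #|[pred T | set_packing C T]|)%N.
  apply/card_gt0P; exists set0; rewrite inE /set_packing; apply/forallP => i.
  by rewrite setI0 cards0.
move=> /(eq_bigmax_cond (fun T : {set E} => #|T|)) [P PP hP].
by exists P; split; [exact: PP | rewrite /mstar hP].
Qed.

Lemma mstar_le : (mstar C <= #|E|)%N.
Proof. by have [P [_ <-]] := packing_ex; exact: max_card. Qed.

Lemma card_packing_cover P : set_packing C P -> forall S, (#|P :&: CS C S| <= #|S|)%N.
Proof.
move=> hP S; elim: {S}(#|S|).+1 {-2}S (ltnSn #|S|) => [|n IH] S hS //.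
case: (set_0Vmem S) => [-> | [i iS]].
  by rewrite /CS big_set0 setI0 cards0.
rewrite /CS (big_setD1 i iS) /= setIUr.
have [h _] := leq_card_setU (P :&: C i) (P :&: \bigcup_(j in S :\ i) C j).
apply: (leq_trans h).
have h1 : (#|P :&: C i| <= 1)%N by rewrite setIC; move/forallP: hP; apply.
have h3 : (#|S :\ i| < n)%N by move: hS; rewrite (cardsD1 i S) iS; lia.
have h2 := IH (S :\ i) h3.
rewrite (cardsD1 i S) iS; rewrite /CS in h2; lia.
Qed.

End Comb.

Section Part1.
Variables (R : realFieldType) (V E : finType) (C : V -> {set E}).

Definition g2 (s1 : {ffun {set V} -> R}) (T : {set E}) := (#|T|)%:R - f2 C s1 T.

Lemma g2_sum s1 T : g2 s1 T = \sum_e (e \in T)%:R * (1 - pe C s1 e).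
Proof.
rewrite /g2 f2_p card_indT -sumrB; apply: eq_bigr => e _; ring.
Qed.

Lemma pe_ge0 (s1 : {ffun {set V} -> R}) e : (forall S, 0 <= s1 S) -> 0 <= pe C s1 e.
Proof. by move=> h; apply: sumr_ge0 => S _; apply: mulr_ge0 => //; exact: ler0n. Qed.

Lemma one_sub_pe (s1 : {ffun {set V} -> R}) e : \sum_S s1 S = 1 ->
  1 - pe C s1 e = \sum_S s1 S * (1 - (e \in CS C S)%:R).
Proof.
move=> h1; rewrite -[X in X - _]h1 /pe -sumrB; apply: eq_bigr => S _; ring.
Qed.

Lemma pe_le1 (s1 : {ffun {set V} -> R}) e : (forall S, 0 <= s1 S) -> \sum_S s1 S = 1 ->
  pe C s1 e <= 1.
Proof.
move=> h0 h1; rewrite -subr_ge0 one_sub_pe //; apply: sumr_ge0 => S _.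
apply: mulr_ge0 => //; case: (e \in CS C S); rewrite /= ?subrr ?subr0 //.
Qed.

Lemma pe_lt1 (s1 : {ffun {set V} -> R}) e S0 : (forall S, 0 <= s1 S) -> \sum_S s1 S = 1 ->
  s1 S0 != 0 -> e \notin CS C S0 -> pe C s1 e < 1.
Proof.
move=> h0 h1 hS0 he; rewrite -subr_gt0 one_sub_pe //.
apply: (lt_le_trans _ (term_le_sum (F := fun S => s1 S * (1 - (e \in CS C S)%:R)) S0 _)).
  by rewrite (negbTE he) subr0 mulr1 lt_def hS0 h0.
move=> S; apply: mulr_ge0 => //; case: (e \in CS C S); rewrite /= ?subrr ?subr0 //.
Qed.

Lemma qe_ge0 (s2 : {ffun {set E} -> R}) e : (forall T, 0 <= s2 T) -> 0 <= qe s2 e.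
Proof. by move=> h; apply: sumr_ge0 => T _; apply: mulr_ge0 => //; exact: ler0n. Qed.

Lemma CS_sub (S S' : {set V}) : S \subset S' -> CS C S \subset CS C S'.
Proof.
move=> /subsetP h; apply/subsetP => x /bigcupP [j jS xj]; apply/bigcupP.
by exists j => //; apply: h.
Qed.

Lemma CS_in (S : {set V}) i e : i \in S -> e \in C i -> e \in CS C S.
Proof. by move=> iS ei; apply/bigcupP; exists i. Qed.

End Part1.

Section Part1b.
Variables (R : realFieldType) (V E : finType) (C : V -> {set E}).

Lemma nash_facts b1 b2 (s1 : {ffun {set V} -> R}) s2 : nash C b1 b2 s1 s2 ->
  [/\ (forall S : {set V}, (#|S| <= b1)%N -> f1 C s2 S <= U1 C s1 s2),
      (forall S : {set V}, s1 S != 0 -> f1 C s2 S = U1 C s1 s2),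
      (forall T : {set E}, (#|T| <= b2)%N -> g2 C s1 T <= U2 C s1 s2) &
      (forall T : {set E}, s2 T != 0 -> g2 C s1 T = U2 C s1 s2)].
Proof.
move=> [D1 [D2 [N1 N2]]].
have [s1ge [s1sum s1supp]] := D1; have [s2ge [s2sum s2supp]] := D2.
have f1le : forall S : {set V}, (#|S| <= b1)%N -> f1 C s2 S <= U1 C s1 s2.
  by move=> S hS; rewrite -U1_pureL; apply: N1; apply: pure_Delta.
have g2le : forall T : {set E}, (#|T| <= b2)%N -> g2 C s1 T <= U2 C s1 s2.
  by move=> T hT; rewrite /g2 -U2_pureR //; apply: N2; apply: pure_Delta.
split => //.
- apply: (supp_eq (Delta_distr D1)) => [S hS|]; first by apply: f1le; exact: s1supp.
  by rewrite U1_L.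
- apply: (supp_eq (Delta_distr D2)) => [T hT|]; first by apply: g2le; exact: s2supp.
  by rewrite U2_R.
Qed.

Lemma part1S (hcov : forall e : E, exists i : V, e \in C i) b1 b2 (hb2 : (0 < b2)%N)
  (hn : (b1 < nstar C)%N) (s1 : {ffun {set V} -> R}) s2 :
  nash C b1 b2 s1 s2 -> forall S : {set V}, s1 S != 0 -> #|S| = b1.
Proof.
move=> NA; have [f1le supp1 g2le supp2] := nash_facts NA.
have [[s1ge [s1sum s1supp]] [[s2ge [s2sum s2supp]] _]] := NA.
move=> S0 hS0; have hb : (#|S0| <= b1)%N := s1supp _ hS0.
case: (ltnP #|S0| b1) => hlt; last by apply/eqP; rewrite eqn_leq hb hlt.
exfalso.
have q0 : forall e : E, e \notin CS C S0 -> qe s2 e = 0.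
  move=> e he; have [i ei] := hcov e.
  have hc : (#|i |: S0| <= b1)%N by rewrite cardsU1; case: (i \in S0) => /=; lia.
  have := f1le _ hc; rewrite -(supp1 _ hS0) !f1_q => h.
  have := gain (h := qe s2) (A := CS C S0) (B := CS C (i |: S0)) (e0 := e)
    (fun e => qe_ge0 e s2ge) (CS_sub C (subsetUr _ _)) (CS_in (C:=C) (setU11 _ _) ei) he.
  move=> h2; apply/eqP; rewrite eq_le qe_ge0 // andbT; lra.
have vL : U1 C s1 s2 = \sum_T s2 T * (#|T|)%:R.
  rewrite -(supp1 _ hS0) f1_q.
  have -> : \sum_e (e \in CS C S0)%:R * qe s2 e = \sum_e qe s2 e.
    apply: eq_bigr => e _; case: (boolP (e \in CS C S0)) => he; first by rewrite mul1r.
    by rewrite q0 // mulr0.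
  rewrite /qe exchange_big /=; apply: eq_bigr => T _.
  by rewrite card_indT mulr_sumr.
have w0 : U2 C s1 s2 = 0.
  rewrite U2_R //.
  under eq_bigr => T _ do rewrite mulrBr.
  by rewrite sumrB -U1_R -vL subrr.
have [e he] := not_cover (ltn_trans hlt hn).
have := g2le [set e]; rewrite cards1 => /(_ hb2).
rewrite g2_sum w0 (bigD1 e) //= in_set1 eqxx mul1r big1 ?addr0.
  by have := pe_lt1 s1ge s1sum hS0 he; lra.
by move=> x /negbTE hx; rewrite in_set1 hx mul0r.
Qed.

End Part1b.

Section Part1T.
Variables (R : realFieldType) (V E : finType) (C : V -> {set E}).

Lemma part1T (hcov : forall e : E, exists i : V, e \in C i) b1 b2
  (hn : (b1 < nstar C)%N) (hm : (b2 < mstar C)%N) (s1 : {ffun {set V} -> R}) s2 :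
  nash C b1 b2 s1 s2 -> forall T : {set E}, s2 T != 0 -> #|T| = b2.
Proof.
move=> NA; have [f1le supp1 g2le supp2] := nash_facts NA.
have [[s1ge [s1sum s1supp]] [[s2ge [s2sum s2supp]] _]] := NA.
have hpe : forall e, 0 <= 1 - pe C s1 e.
  by move=> e; rewrite subr_ge0; apply: pe_le1.
move=> T0 hT0; have hb : (#|T0| <= b2)%N := s2supp _ hT0.
case: (ltnP #|T0| b2) => hlt; last by apply/eqP; rewrite eqn_leq hb hlt.
exfalso.
set Y := [set e | pe C s1 e < 1].
(* a generic contradiction: improving a support set *)
have improve : forall (T A T' : {set E}) e, s2 T != 0 -> (#|T'| <= b2)%N ->
    g2 C s1 A = g2 C s1 T -> A \subset T' -> e \in T' -> e \notin A -> e \in Y -> False.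
  move=> T A T' e hT hT' hA sAT' eT' eA eY.
  have := gain (h := fun e => 1 - pe C s1 e) hpe sAT' eT' eA.
  rewrite -!g2_sum hA (supp2 _ hT) => h.
  have := g2le _ hT'; move: eY; rewrite inE; lra.
have YT0 : Y \subset T0.
  apply/subsetP => e eY; apply/negPn/negP => eT.
  apply: (improve T0 T0 (e |: T0) e hT0) => //.
  - by rewrite cardsU1 eT; lia.
  - exact: subsetUr.
  - exact: setU11.
have cY : (#|Y| < b2)%N by apply: leq_ltn_trans (subset_leq_card YT0) hlt.
have YT : forall T, s2 T != 0 -> Y \subset T.
  move=> T hT; apply/subsetP => e eY; apply/negPn/negP => eT.
  have hbT : (#|T| <= b2)%N := s2supp _ hT.
  case: (ltnP #|T| b2) => hTl.
    apply: (improve T T (e |: T) e hT) => //.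
    - by rewrite cardsU1 eT; lia.
    - exact: subsetUr.
    - exact: setU11.
  have [f fT fY] : exists2 f, f \in T & f \notin Y.
    apply/subsetPn; apply/negP => sTY.
    have := subset_leq_card sTY; lia.
  have pf : pe C s1 f = 1.
    by apply/eqP; rewrite eq_le pe_le1 //=; move: fY; rewrite inE -leNgt.
  apply: (improve T (T :\ f) (e |: (T :\ f)) e hT).
  - rewrite cardsU1 (cardsD1 f T) fT in hbT *; case: (e \in T :\ f) => /=; lia.
  - rewrite !g2_sum; apply: eq_bigr => x _; rewrite in_setD1.
    case: (eqVneq x f) => [->|] /=; first by rewrite pf subrr !mulr0.
    by [].
  - exact: subsetUr.
  - exact: setU11.
  - by rewrite in_setD1 (negbTE eT) andbF.
  - exact: eY.
have qY : forall y, y \in Y -> qe s2 y = 1.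
  move=> y yY; rewrite /qe -[RHS]s2sum; apply: eq_bigr => T _.
  case: (eqVneq (s2 T) 0) => [->|hT]; first by rewrite !mul0r.
  by rewrite (subsetP (YT T hT) y yY) mulr1.
have [S /andP [_ hS]] : exists S, predT S && (0 < s1 S).
  by apply: psumr_neq0P => //; rewrite s1sum; apply/eqP; exact: oner_neq0.
have hS0 : s1 S != 0 by rewrite gt_eqF.
have hSb : (#|S| <= b1)%N := s1supp _ hS0.
have outY : forall e, e \notin CS C S -> e \in Y.
  by move=> e he; rewrite inE; apply: (pe_lt1 s1ge s1sum hS0 he).
have [P [hP cP]] := packing_ex C.
have bound : forall T, s2 T != 0 -> (#|CS C S :&: T| + 1 <= #|S|)%N.
  move=> T hT.
  have sPT : P :\: CS C S \subset T :\: CS C S.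
    apply/subsetP => x; rewrite !inE => /andP [xn xP]; rewrite xn /=.
    exact: (subsetP (YT T hT) x (outY x xn)).
  have h1 := subset_leq_card sPT.
  have h2 := cardsID (CS C S) P; have h3 := cardsID (CS C S) T.
  have h4 := card_packing_cover hP S.
  have h5 : (#|T| <= b2)%N := s2supp _ hT.
  rewrite setIC; lia.
set s := (#|S|)%:R : R.
set v := U1 C s1 s2.
have vle : v <= s - 1.
  rewrite /v -(supp1 _ hS0) /f1; apply: (avg_le (Delta_distr (proj1 (proj2 NA)))).
  move=> T hT; have h := bound T hT; rewrite -(ler_nat R) natrD in h.
  rewrite /Fr /Fdet /s; lra.
have [y hy] := not_cover (leq_ltn_trans hSb hn).
have yY := outY y hy.
have [i yi] := hcov y.
pose Sj j := i |: (S :\ j).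
have f1j : forall j, j \in S -> f1 C s2 (Sj j) <= v.
  move=> j jS; apply: f1le; move: hSb.
  by rewrite /Sj cardsU1 (cardsD1 j S) jS; case: (i \in S :\ j) => /=; lia.
have up : \sum_(j in S) f1 C s2 (Sj j) <= s * v.
  apply: le_trans (ler_sum _ (fun j jS => f1j j jS)) _.
  by rewrite sumr_const -mulr_natl.
have cnt : forall e, (s - 1) * (e \in CS C S)%:R + s * (e == y)%:R <=
    \sum_(j in S) (e \in CS C (Sj j))%:R.
  move=> e; case: (eqVneq e y) => [->|ney].
    rewrite (negbTE hy) mulr0 add0r mulr1n mulr1.
    have -> : \sum_(j in S) (y \in CS C (Sj j))%:R = \sum_(j in S) (1 : R).
      by apply: eq_bigr => j jS; rewrite (CS_in (C:=C) (setU11 i _) yi).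
    by rewrite sumr_const.
  rewrite mulr0 addr0.
  case: (boolP (e \in CS C S)) => heS; last first.
    by rewrite mulr0; apply: sumr_ge0 => j _; exact: ler0n.
  rewrite mulr1n mulr1; have [k kS ek] := bigcupP heS.
  have -> : s - 1 = \sum_(j in S) (1 - (j == k)%:R).
    rewrite sumrB sumr_const (bigD1 k) //= eqxx big1 ?addr0 //.
    by move=> j /andP [_ /negbTE ->].
  apply: ler_sum => j jS; case: (eqVneq j k) => [->|njk] /=.
    by rewrite mulr1n subrr ler0n.
  rewrite mulr0n subr0 (CS_in (C:=C) (i:=k) _ ek) //.
  by rewrite !inE kS andbT [k == j]eq_sym njk orbT.
have low : (s - 1) * v + s <= \sum_(j in S) f1 C s2 (Sj j).
  have -> : (s - 1) * v + s =
      \sum_e ((s - 1) * (e \in CS C S)%:R + s * (e == y)%:R) * qe s2 e.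
    under [RHS]eq_bigr => e _ do rewrite mulrDl -!mulrA.
    rewrite big_split /= -!mulr_sumr.
    have -> : \sum_e (e == y)%:R * qe s2 e = qe s2 y.
      rewrite (bigD1 y) //= eqxx mul1r big1 ?addr0 //.
      by move=> e /negbTE ->; rewrite mul0r.
    by rewrite qY // mulr1 /v -(supp1 _ hS0) f1_q.
  have -> : \sum_(j in S) f1 C s2 (Sj j) =
      \sum_e (\sum_(j in S) (e \in CS C (Sj j))%:R) * qe s2 e.
    under eq_bigr => j _ do rewrite f1_q.
    by rewrite exchange_big /=; apply: eq_bigr => e _; rewrite mulr_suml.
  apply: ler_sum => e _; apply: ler_wpM2r; [exact: qe_ge0 | exact: cnt].
have := le_trans low up; rewrite mulrBl mul1r; lra.
Qed.

End Part1T.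

Lemma ffun_Delta (R : realFieldType) (X : finType) (P : pred X) (x : X -> R) :
  (forall i, 0 <= x i) -> \sum_i x i = 1 -> (forall i, x i != 0 -> P i) ->
  in_Delta P [ffun i => x i].
Proof.
move=> h1 h2 h3; split; first by move=> i; rewrite ffunE.
split; first by rewrite -h2; apply: eq_bigr => i _; rewrite ffunE.
by move=> i; rewrite ffunE; apply: h3.
Qed.

Lemma bar_Delta (R : realFieldType) (X : finType) (P Q : pred X) (s : {ffun X -> R}) :
  (forall a, P a -> Q a) -> in_Delta P s -> in_Delta Q s.
Proof. by move=> h [h1 [h2 h3]]; split => //; split => // a /h3 /h. Qed.

Unset Implicit Arguments.

Theorem proposition2 (R : realFieldType) (V E : finType) (C : V -> {set E})
  (hV : (0 < #|V|)%N) (hE : (0 < #|E|)%N)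
  (hcov : forall e : E, exists i : V, e \in C i)
  (b1 b2 : nat) (hb1 : (0 < b1)%N) (hb2 : (0 < b2)%N)
  (hn : (b1 < nstar C)%N) (hm : (b2 < mstar C)%N) :
  (forall (s1 : {ffun {set V} -> R}) (s2 : {ffun {set E} -> R}),
     nash C b1 b2 s1 s2 ->
     (forall S, s1 S != 0 -> #|S| = b1) /\ (forall T, s2 T != 0 -> #|T| = b2)) /\
  (forall (s1 : {ffun {set V} -> R}) (s2 : {ffun {set E} -> R}),
     in_Delta (A1 b1) s1 -> in_Delta (A2 b2) s2 ->
     (nash C b1 b2 s1 s2 <-> maxmin_opt C b1 b2 s1 /\ minmax_opt C b1 b2 s2)).
Proof.
have b1V : (b1 <= #|V|)%N by apply: leq_trans (ltnW hn) (nstar_leV hcov).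
have b2E : (b2 <= #|E|)%N by apply: leq_trans (ltnW hm) (mstar_le C).
split.
  move=> s1 s2 NA; split.
    exact: (part1S hcov hb2 hn NA).
  exact: (part1T hcov hn hm NA).
move=> s1 s2 D1 D2.
have [s1ge [s1sum s1supp]] := D1; have [s2ge [s2sum s2supp]] := D2.
have hpe : forall e, 0 <= 1 - pe C s1 e.
  by move=> e; rewrite subr_ge0; apply: pe_le1.
split.
- move=> NA; have [f1le supp1 g2le supp2] := nash_facts NA.
  have P1S := part1S hcov hb2 hn NA; have P1T := part1T hcov hn hm NA.
  have [_ [_ [N1 N2]]] := NA.
  set v := U1 C s1 s2.
  have L2 : \sum_T s2 T * (#|T|)%:R = b2%:R.
    by apply: (avg_eq (Delta_distr D2)) => T hT; rewrite P1T.
  have w : U2 C s1 s2 = b2%:R - v.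
    rewrite U2_R //; under eq_bigr => T _ do rewrite mulrBr.
    by rewrite sumrB L2 /v U1_R.
  have f2ge : forall T : {set E}, #|T| = b2 -> v <= f2 C s1 T.
    move=> T hT; have := g2le T; rewrite hT leqnn w /g2 hT => /(_ isT); lra.
  have D1b : in_Delta (A1bar b1) s1.
    by split => //; split => // S hS; rewrite /A1bar P1S.
  have D2b : in_Delta (A2bar b2) s2.
    by split => //; split => // T hT; rewrite /A2bar P1T.
  split.
  + split => // s1' D1'.
    have D1'A : in_Delta (A1 b1) s1' by apply: (bar_Delta _ D1') => S /eqP hS; rewrite /A1 hS.
    have := N1 s1' D1'A; rewrite U1_R => h.
    have [T' [hT' hle]] := supp_exists_le (Delta_distr D2) h.
    exists T'; first by rewrite /A2bar P1T.
    move=> T /eqP hT; rewrite !U1_pureR; exact: le_trans hle (f2ge T hT).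
  + split => // s2' D2'.
    have D2'A : in_Delta (A2 b2) s2' by apply: (bar_Delta _ D2') => T /eqP hT; rewrite /A2 hT.
    have L2' : \sum_T s2' T * (#|T|)%:R = b2%:R.
      by apply: (avg_eq (Delta_distr D2')) => T /(proj2 (proj2 D2')) /eqP ->.
    have := N2 s2' D2'A; rewrite w U2_R //.
    under eq_bigr => T _ do rewrite mulrBr.
    rewrite sumrB L2' -U1_R => h.
    have h2 : v <= U1 C s1 s2' by lra.
    rewrite U1_L in h2.
    have [S' [hS' hge]] := supp_exists_ge (Delta_distr D1) h2.
    exists S'; first by rewrite /A1bar P1S.
    move=> S /eqP hS; rewrite !U1_pureL; apply: le_trans hge.
    by apply: f1le; rewrite hS.
- move=> [[D1b opt1] [D2b opt2]].
  have hh2 : (#|(set0 : {set E})| <= b2 <= #|E|)%N by rewrite cards0 b2E.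
  have [Tb [_ hTb]] := extend hh2.
  have hTb' : A2bar b2 Tb by rewrite /A2bar hTb.
  have hh1 : (#|(set0 : {set V})| <= b1 <= #|V|)%N by rewrite cards0 b1V.
  have [Sb [_ hSb]] := extend hh1.
  have hSb' : A1bar b1 Sb by rewrite /A1bar hSb.
  have [S0 [hS0 H2]] := exists_max (f1 C s2) hSb'.
  have H1 : forall T, A2bar b2 T -> f1 C s2 S0 <= f2 C s1 T.
    case: (ville (A1bar b1) (Fr R C) (f1 C s2 S0) hTb') => [[x [x0 [x1 [xs xT]]]] | [z [z0 [z1 [zs zS]]]]].
      have Dx := ffun_Delta x0 x1 xs.
      have [T' hT' H] := opt1 _ Dx.
      move=> T hT; apply: le_trans (xT T' hT') _.
      have := H T hT; rewrite !U1_pureR.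
      have -> : f2 C [ffun i => x i] T' = \sum_i x i * Fr R C i T'.
        by apply: eq_bigr => S _; rewrite ffunE.
      by [].
    exfalso; have Dz := ffun_Delta z0 z1 zs.
    have [S' hS' H] := opt2 _ Dz.
    have := H S0 hS0; rewrite !U1_pureL.
    have -> : f1 C [ffun i => z i] S' = \sum_j Fr R C S' j * z j.
      by apply: eq_bigr => T _; rewrite ffunE mulrC.
    have := zS S' hS'; lra.
  have vle : U1 C s1 s2 <= f1 C s2 S0.
    rewrite U1_L; apply: (avg_le (Delta_distr D1b)) => S hS; apply: H2.
    exact: (proj2 (proj2 D1b)) _ hS.
  have vge : f1 C s2 S0 <= U1 C s1 s2.
    rewrite U1_R; apply: (avg_ge (Delta_distr D2b)) => T hT; apply: H1.
    exact: (proj2 (proj2 D2b)) _ hT.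
  split => //; split => //; split.
  + move=> s1' D1'; apply: le_trans vge; rewrite U1_L.
    apply: (avg_le (Delta_distr D1')) => S hS.
    have hSb1 : (#|S| <= b1 <= #|V|)%N by rewrite b1V andbT; exact: (proj2 (proj2 D1') S hS).
    have [Sh [sSh cSh]] := extend hSb1.
    have hSh : A1bar b1 Sh by rewrite /A1bar cSh.
    apply: le_trans (H2 Sh hSh).
    rewrite !f1_q; apply: mono; [exact: (fun e => qe_ge0 e s2ge) | exact: CS_sub].
  + move=> s2' D2'.
    have eq2 : U2 C s1 s2 = b2%:R - U1 C s1 s2.
      rewrite U2_R //; under eq_bigr => T _ do rewrite mulrBr.
      rewrite sumrB -U1_R; congr (_ - _).
      apply: (avg_eq (Delta_distr D2b)) => T hT.
      by have /eqP -> := proj2 (proj2 D2b) T hT.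
    rewrite eq2 U2_R //.
    have bnd : \sum_T s2' T * ((#|T|)%:R - f2 C s1 T) <= b2%:R - f1 C s2 S0.
      apply: (avg_le (Delta_distr D2')) => T hT.
      have hTb2 : (#|T| <= b2 <= #|E|)%N by rewrite b2E andbT; exact: (proj2 (proj2 D2') T hT).
      have [Th [sTh cTh]] := extend hTb2.
      have hTh : A2bar b2 Th by rewrite /A2bar cTh.
      have := H1 Th hTh.
      have := mono (h := fun e => 1 - pe C s1 e) hpe sTh; rewrite -!g2_sum /g2 cTh; lra.
    lra.
Qed.
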